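(* ($\mathbf{RCA_0}$) For any coded prae-dilator $T$, the linear order $\vartheta(T)$ is a Bachmann–Howard fixed point of $T$, i.e. there exists a Bachmann–Howard collapse $\vartheta:D^T_{\vartheta(T)}\to\vartheta(T)$.
   Context: Conventions. Each natural number $n$ is identified with the linear order $\{0,\dots,n-1\}$; the category of natural numbers has these as objects and strictly increasing maps as morphisms. For a finite linear order $a$ write $|a|$ for its cardinality and $\operatorname{en}_a:|a|\to a$ for the unique order isomorphism; for an order embedding $f:a\to b$ of finite linear orders, $|f|:|a|\to|b|$ is the unique strictly increasing map with $\operatorname{en}_b\circ|f|=f\circ\operatorname{en}_a$. For $c\subseteq d$, $\iota_c^d$ is the inclusion. $[X]^{<\omega}$ is the set of finite subsets of $X$, $[f]^{<\omega}(a)=\{f(s)\mid s\in a\}$. For a linear order $X$, $a\in[X]^{<\omega}$, $x\in X$: $a<^{\mathrm{fin}}_X x$ means $s<_Xx$ for all $s\in a$. A coded prae-dilator (represented by sets of natural numbers coding the orders $T_n$, the maps $T_f$ and the supports) consists of a functor $T$ from the category of natural numbers to linear orders with fields in $\mathbb N$, and a natural transformation $\operatorname{supp}^T:T\Rightarrow[\cdot]^{<\omega}$ ($\operatorname{supp}^T_m\circ T_f=[f]^{<\omega}\circ\operatorname{supp}^T_n$ for $f:n\to m$) such that every $\sigma\in T_n$ lies in the range of $T_{\iota\circ\operatorname{en}}$, with $\operatorname{en}=\operatorname{en}_{\operatorname{supp}^T_n(\sigma)}$ and $\iota$ the inclusion of $\operatorname{supp}^T_n(\sigma)$ into $n$.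 For a linear order $(X,<_X)$ with $X\subseteq\mathbb N$: $D^T_X=\{\langle a,\sigma\rangle\mid a\in[X]^{<\omega},\ \sigma\in T_{|a|},\ \operatorname{supp}^T_{|a|}(\sigma)=|a|\}$ ordered by $\langle a,\sigma\rangle<_{D^T_X}\langle b,\tau\rangle$ iff $T_{|\iota_a^{a\cup b}|}(\sigma)<_{T_{|a\cup b|}}T_{|\iota_b^{a\cup b}|}(\tau)$, with $\operatorname{supp}^{D^T}_X(\langle a,\sigma\rangle)=a$. A Bachmann–Howard collapse is a function $\vartheta:D^T_X\to X$ such that for all $\rho,\pi\in D^T_X$: (a) if $\rho<_{D^T_X}\pi$ and $\operatorname{supp}^{D^T}_X(\rho)<^{\mathrm{fin}}_X\vartheta(\pi)$ then $\vartheta(\rho)<_X\vartheta(\pi)$; (b) $\operatorname{supp}^{D^T}_X(\rho)<^{\mathrm{fin}}_X\vartheta(\rho)$. $X$ is then called a Bachmann–Howard fixed point of $T$. The order $\vartheta(T)$ (terms coded by natural numbers): defined by simultaneous recursion; whenever $s_0<_{\vartheta(T)}\dots<_{\vartheta(T)}s_{n-1}$ are in $\vartheta(T)$ ($n\geq0$) and $\sigma\in T_n$ with $\operatorname{supp}^T_n(\sigma)=n$, the term $\vartheta_\sigma^{s_0,\dots,s_{n-1}}$ is in $\vartheta(T)$. For $s=\vartheta_\sigma^{s_0,\dots,s_{n-1}}$, $t=\vartheta_\tau^{t_0,\dots,t_{m-1}}$: $s<_{\vartheta(T)}t$ iff (i') there are strictly increasing $f:n\to k$, $g:m\to k$, $k=|\{s_0,\dots,s_{n-1},t_0,\dots,t_{m-1}\}|$,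 with $f(i)<g(j)\Leftrightarrow s_i<_{\vartheta(T)}t_j$ and $g(j)<f(i)\Leftrightarrow t_j<_{\vartheta(T)}s_i$, such that $T_f(\sigma)<_{T_k}T_g(\tau)$, and moreover $n=0$ or $s_{n-1}<_{\vartheta(T)}t$; or (ii') $m>0$ and $s\leq_{\vartheta(T)}t_{m-1}$. *)

(* Defs.v *)
From mathcomp Require Import all_boot.
From Stdlib Require List.

Set Implicit Arguments.
Unset Strict Implicit.
Unset Printing Implicit Defensive.

(** * Morphisms of the category of natural numbers
    A strictly increasing map f : n -> m is represented by the list
    [:: f 0; ...; f (n-1)] of its values. *)
Definition hom (n m : nat) (f : seq nat) : Prop :=
  size f = n /\ sorted ltn f /\ all (fun i => i < m) f.

Definition comp_hom (g f : seq nat) : seq nat := map (nth 0 g) f.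
Definition id_hom (n : nat) : seq nat := iota 0 n.

(** * Data of a coded prae-dilator
    - [Tset n s]    : s \in T_n   (T_n has field in nat)
    - [Tlt n s t]   : s <_{T_n} t
    - [Tmor m f s]  : T_f(s), for f : size f -> m
    - [Tsupp n s]   : supp^T_n(s), a finite subset of n, given by its
                      strictly increasing enumeration (so en_{supp} is this list) *)
Record pd_data := PD {
  Tset  : nat -> nat -> Prop;
  Tlt   : nat -> nat -> nat -> Prop;
  Tmor  : nat -> seq nat -> nat -> nat;
  Tsupp : nat -> nat -> seq nat
}.

Definition prae_dilator (T : pd_data) : Prop :=
  (forall n s, Tset T n s -> ~ Tlt T n s s) /\
  (forall n s t u, Tset T n s -> Tset T n t -> Tset T n u ->
      Tlt T n s t -> Tlt T n t u -> Tlt T n s u) /\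
  (forall n s t, Tset T n s -> Tset T n t ->
      Tlt T n s t \/ s = t \/ Tlt T n t s) /\
  (forall n m f s, hom n m f -> Tset T n s -> Tset T m (Tmor T m f s)) /\
  (forall n m f s t, hom n m f -> Tset T n s -> Tset T n t ->
      Tlt T n s t -> Tlt T m (Tmor T m f s) (Tmor T m f t)) /\
  (forall n s, Tset T n s -> Tmor T n (id_hom n) s = s) /\
  (forall n m k f g s, hom n m f -> hom m k g -> Tset T n s ->
      Tmor T k (comp_hom g f) s = Tmor T k g (Tmor T m f s)) /\
  (forall n s, Tset T n s -> hom (size (Tsupp T n s)) n (Tsupp T n s)) /\
  (forall n m f s, hom n m f -> Tset T n s ->
      Tsupp T m (Tmor T m f s) = map (nth 0 f) (Tsupp T n s)) /\
  (* support condition: s is in the range of T_{iota o en} *)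
  (forall n s, Tset T n s ->
      exists s0, Tset T (size (Tsupp T n s)) s0 /\ Tmor T n (Tsupp T n s) s0 = s).

Fixpoint chain (A : Type) (r : A -> A -> Prop) (s : seq A) : Prop :=
  match s with
  | [::] => True
  | x :: s' => match s' with
               | [::] => True
               | y :: _ => r x y /\ chain r s'
               end
  end.

(** * The order D^T_X, for a linear order X given as a carrier predicate
      [inX] on a type A with strict order [ltX].
    An element <a, s> is represented by (a, s) where a is the strictly
    increasing enumeration of the finite set a. *)
Section D.
Variables (T : pd_data) (A : Type) (inX : A -> Prop) (ltX : A -> A -> Prop).

Definition Dmem (p : seq A * nat) : Prop :=
  (forall x, List.In x p.1 -> inX x) /\ chain ltX p.1 /\
  Tset T (size p.1) p.2 /\ Tsupp T (size p.1) p.2 = iota 0 (size p.1).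

(** f = |iota_a^c| : en_c o f = en_a *)
Definition enum_emb (f : seq nat) (a c : seq A) : Prop :=
  size f = size a /\
  forall i, i < size a -> List.nth_error c (nth 0 f i) = List.nth_error a i.

(** <a,s> <_{D^T_X} <b,t>; c is the increasing enumeration of a \cup b *)
Definition Dlt (p q : seq A * nat) : Prop :=
  exists (c : seq A) (fa fb : seq nat),
    chain ltX c /\ (forall x, List.In x c <-> List.In x p.1 \/ List.In x q.1) /\
    enum_emb fa p.1 c /\ enum_emb fb q.1 c /\
    Tlt T (size c) (Tmor T (size c) fa p.2) (Tmor T (size c) fb q.2).

Definition fin_below (a : seq A) (x : A) : Prop :=
  forall y, List.In y a -> ltX y x.

(** supp^{D^T}_X(<a,s>) = a *)
Definition BH_collapse (theta : seq A * nat -> A) : Prop :=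
  (forall r, Dmem r -> inX (theta r)) /\
  (forall r p, Dmem r -> Dmem p ->
     (Dlt r p -> fin_below r.1 (theta p) -> ltX (theta r) (theta p)) /\
     fin_below r.1 (theta r)).

Definition strict_linear : Prop :=
  (forall x, inX x -> ~ ltX x x) /\
  (forall x y z, inX x -> inX y -> inX z -> ltX x y -> ltX y z -> ltX x z) /\
  (forall x y, inX x -> inX y -> ltX x y \/ x = y \/ ltX y x).

Definition BH_fixed_point : Prop :=
  strict_linear /\ exists theta, BH_collapse theta.
End D.

Inductive term : Type := Th : nat -> seq term -> term.

Fixpoint tsize (t : term) : nat :=
  match t with Th _ ss => (sumn (map tsize ss)).+1 end.

(** comparison with fuel; the recursion of the paper is on the sum of the
    sizes of the compared terms, realised by [th_ltT] below. *)
Fixpoint th_lt (T : pd_data) (k : nat) (s t : term) {struct k} : Prop :=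
  match k with
  | 0 => False
  | k'.+1 =>
    match s, t with
    | Th sg ss, Th tu ts =>
      let n := size ss in
      let m := size ts in
      (* (i') *)
      (exists (c : seq term) (f g : seq nat),
         List.NoDup c /\ (forall x, List.In x c <-> List.In x ss \/ List.In x ts) /\
         hom n (size c) f /\ hom m (size c) g /\
         (forall i j, i < n -> j < m ->
            (nth 0 f i < nth 0 g j <-> th_lt T k' (nth s ss i) (nth s ts j)) /\
            (nth 0 g j < nth 0 f i <-> th_lt T k' (nth s ts j) (nth s ss i))) /\
         Tlt T (size c) (Tmor T (size c) f sg) (Tmor T (size c) g tu) /\
         (n = 0 \/ th_lt T k' (last s ss) t))
      \/
      (* (ii') *)
      (0 < m /\ (s = last s ts \/ th_lt T k' s (last s ts)))
    end
  end.

Definition th_ltT (T : pd_data) (s t : term) : Prop :=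
  th_lt T (tsize s + tsize t) s t.

Fixpoint th_wf (T : pd_data) (t : term) : Prop :=
  match t with
  | Th sg ss =>
    foldr and True (map (th_wf T) ss) /\ chain (th_ltT T) ss /\
    Tset T (size ss) sg /\ Tsupp T (size ss) sg = iota 0 (size ss)
  end.

(* Main.v *)
From Pilot Require Import Defs.
From HB Require Import structures.
From mathcomp Require Import all_boot.
From Stdlib Require List.
From Stdlib Require ClassicalEpsilon.

Set Implicit Arguments.
Local Notation tsize := Pilot.Defs.tsize.
Unset Strict Implicit.
Unset Printing Implicit Defensive.

Fixpoint to_tree (t : term) : GenTree.tree nat :=
  match t with Th n ss => GenTree.Node n (map to_tree ss) end.
Fixpoint of_tree (x : GenTree.tree nat) : term :=
  match x with
  | GenTree.Leaf _ => Th 0 [::]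
  | GenTree.Node n ts => Th n (map of_tree ts)
  end.
Fixpoint to_treeK (t : term) : of_tree (to_tree t) = t :=
  match t with
  | Th n ss => f_equal (Th n)
      ((fix go (l : seq term) : map of_tree (map to_tree l) = l :=
          match l with
          | [::] => erefl
          | x :: xs => f_equal2 cons (to_treeK x) (go xs)
          end) ss)
  end.
HB.instance Definition _ := Countable.copy term (can_type to_treeK).

Lemma In_mem (A : eqType) (x : A) s : List.In x s <-> x \in s.
Proof.
elim: s => [|y s IH] //=; rewrite in_cons; split.
- by case=> [->|/IH ->]; rewrite ?eqxx ?orbT.
- by case/orP=> [/eqP ->|/IH]; auto.
Qed.

Lemma NoDup_uniq (A : eqType) (s : seq A) : List.NoDup s <-> uniq s.
Proof.
elim: s => [|y s IH] /=; first by split=> // _; constructor.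
split.
- move=> H; inversion H; subst; apply/andP; split; last by apply/IH.
  by apply/negP=> /In_mem.
- case/andP=> H1 H2; constructor; last by apply/IH.
  by move/In_mem; rewrite (negbTE H1).
Qed.

Lemma nth_error_nth (A : Type) (d : A) s i :
  i < size s -> List.nth_error s i = Some (nth d s i).
Proof. by elim: s i => [|x s IH] [|i] //= H; apply: IH. Qed.

Lemma nth_error_size (A : Type) (s : seq A) i x :
  List.nth_error s i = Some x -> i < size s.
Proof. by elim: s i => [|y s IH] [|i] //= /IH. Qed.

Lemma tsize_gt0 t : 0 < tsize t.
Proof. by case: t. Qed.

Lemma tsize_arg x n ss : x \in ss -> tsize x < tsize (Th n ss).
Proof.
rewrite /= ltnS; elim: ss => [|y ss IH] //=; rewrite in_cons.
case/orP=> [/eqP ->|/IH H]; first exact: leq_addr.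
by apply: (leq_trans H); apply: leq_addl.
Qed.

Lemma last_in (A : eqType) (d : A) s : 0 < size s -> last d s \in s.
Proof. by case: s => [|x s] //= _; apply: mem_last. Qed.

Definition step (T : pd_data) (R : term -> term -> Prop) (s t : term) : Prop :=
    match s, t with
    | Th sg ss, Th tu ts =>
      let n := size ss in
      let m := size ts in
      (exists (c : seq term) (f g : seq nat),
         List.NoDup c /\ (forall x, List.In x c <-> List.In x ss \/ List.In x ts) /\
         hom n (size c) f /\ hom m (size c) g /\
         (forall i j, i < n -> j < m ->
            (nth 0 f i < nth 0 g j <-> R (nth s ss i) (nth s ts j)) /\
            (nth 0 g j < nth 0 f i <-> R (nth s ts j) (nth s ss i))) /\
         Tlt T (size c) (Tmor T (size c) f sg) (Tmor T (size c) g tu) /\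
         (n = 0 \/ R (last s ss) t))
      \/
      (0 < m /\ (s = last s ts \/ R s (last s ts)))
    end.

Lemma th_lt_S T k s t : th_lt T k.+1 s t = step T (th_lt T k) s t.
Proof. by []. Qed.

Lemma step_ext1 T (R R' : term -> term -> Prop) s t :
  (forall x y, tsize x + tsize y < tsize s + tsize t -> (R x y <-> R' x y)) ->
  step T R s t -> step T R' s t.
Proof.
case: s => sg ss; case: t => tu ts HR.
have Hs : forall i, i < size ss -> tsize (nth (Th sg ss) ss i) < tsize (Th sg ss).
  by move=> i Hi; apply: tsize_arg; apply: mem_nth.
have Ht : forall i, i < size ts -> tsize (nth (Th sg ss) ts i) < tsize (Th tu ts).
  by move=> i Hi; apply: tsize_arg; apply: mem_nth.
case=> [[c [f [g [H1 [H2 [H3 [H4 [H5 [H6 H7]]]]]]]]]|[H1 H2]].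
- left; exists c, f, g.
  refine (conj H1 (conj H2 (conj H3 (conj H4 (conj _ (conj H6 _)))))).
  + move=> i j Hi Hj; case: (H5 i j Hi Hj) => A B.
    have Hij : tsize (nth (Th sg ss) ss i) + tsize (nth (Th sg ss) ts j) < tsize (Th sg ss) + tsize (Th tu ts).
      by apply: leq_trans (leq_add (Hs _ Hi) (ltnW (Ht _ Hj))); rewrite addSn.
    split; [rewrite -HR //| rewrite -HR //]; by rewrite addnC.
  + case: (posnP (size ss)) => [->|Hn]; first by left.
    right; case: H7 => [H7|]; first by rewrite H7 in Hn.
    rewrite HR // ltn_add2r.
    by apply: tsize_arg; apply: last_in.

- right; split=> //; case: H2 => H2; [by left|right].
  move: H2; rewrite HR //; rewrite ltn_add2l.
  by apply: tsize_arg; apply: last_in.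
Qed.

Lemma step_ext T (R R' : term -> term -> Prop) s t :
  (forall x y, tsize x + tsize y < tsize s + tsize t -> (R x y <-> R' x y)) ->
  (step T R s t <-> step T R' s t).
Proof.
move=> H; split; apply: step_ext1 => x y Hxy; first exact: H.
by apply: iff_sym; apply: H.
Qed.

Lemma th_lt_fuel T N k s t : k <= N -> tsize s + tsize t <= k ->
  (th_lt T k s t <-> th_ltT T s t).
Proof.
elim: N k s t => [|N IH] k s t.
  rewrite leqn0 => /eqP ->; rewrite leqn0 addn_eq0.
  by rewrite -[tsize s == 0]negbK -lt0n tsize_gt0.
case: k => [|k] Hk Hs.
  by move: Hs; rewrite leqn0 addn_eq0 -[tsize s == 0]negbK -lt0n tsize_gt0.
rewrite /th_ltT.
have [K HK] : exists K, tsize s + tsize t = K.+1.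
  by exists (tsize s + tsize t).-1; rewrite prednK // addn_gt0 tsize_gt0.
rewrite HK th_lt_S th_lt_S; apply: step_ext => x y Hxy.
rewrite HK ltnS in Hxy.
rewrite (IH k) //; last by apply: leq_trans Hxy _; rewrite -ltnS -HK.
rewrite (IH K) //; first by rewrite -ltnS -HK (leq_trans Hs).
Qed.

Lemma th_ltT_unfold T s t : th_ltT T s t <-> step T (th_ltT T) s t.
Proof.
rewrite {1}/th_ltT.
have [K HK] : exists K, tsize s + tsize t = K.+1.
  by exists (tsize s + tsize t).-1; rewrite prednK // addn_gt0 tsize_gt0.
rewrite HK th_lt_S; apply: step_ext => x y Hxy.
rewrite HK ltnS in Hxy.
exact: (@th_lt_fuel T K K).
Qed.
Lemma count_iota_lt a n : count (fun p => p < a) (iota 0 n) = minn a n.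
Proof.
elim: n => [|n IH]; first by rewrite minn0.
rewrite -addn1 iotaD count_cat IH /= add0n addn0.
case: (ltnP n a) => Hna.
  by rewrite addn1 (minn_idPr Hna).
by rewrite addn0 addn1 (minn_idPl (leqW Hna)).
Qed.

Lemma hom_nth n m f : hom n m f <->
  size f = n /\ (forall i j, i < j -> j < n -> nth 0 f i < nth 0 f j) /\
  (forall i, i < n -> nth 0 f i < m).
Proof.
split.
- case=> [Hs [Hso Hb]]; split=> //; split.
  + move=> i j Hij Hj; rewrite -Hs in Hj.
    apply: (sorted_ltn_nth ltn_trans 0 Hso) => //; rewrite inE //.
    exact: ltn_trans Hij Hj.
  + move=> i Hi; rewrite -Hs in Hi; move/allP: Hb; apply; exact: mem_nth.
- case=> [Hs [Hso Hb]]; split=> //; split.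
  + apply/(sortedP 0)=> i Hi; apply: Hso => //; by rewrite -Hs.
  + apply/allP=> x /(nthP 0) [i Hi <-]; apply: Hb; by rewrite -Hs.
Qed.

Section Generic.
Variable A : eqType.
Variable r : A -> A -> Prop.
Variable P : A -> Prop.

Definition Lin := 
  (forall x, P x -> ~ r x x) /\
  (forall x y z, P x -> P y -> P z -> r x y -> r y z -> r x z) /\
  (forall x y, P x -> P y -> r x y \/ x = y \/ r y x).

Hypothesis HL : Lin.

Lemma Lirr x : P x -> ~ r x x. Proof. by case: HL => H _; apply: H. Qed.
Lemma Ltrans x y z : P x -> P y -> P z -> r x y -> r y z -> r x z.
Proof. by case: HL => _ [H _]; apply: H. Qed.
Lemma Ltri x y : P x -> P y -> r x y \/ x = y \/ r y x.
Proof. by case: HL => _ [_ H]; apply: H. Qed.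
Lemma Lasym x y : P x -> P y -> r x y -> r y x -> False.
Proof. move=> Px Py H1 H2; apply: (Lirr Px); exact: (Ltrans Px Py Px H1 H2). Qed.

Definition rb x y : bool := if ClassicalEpsilon.excluded_middle_informative (r x y) then true else false.
Lemma rbP x y : reflect (r x y) (rb x y).
Proof. rewrite /rb; case: ClassicalEpsilon.excluded_middle_informative => H; by constructor. Qed.

Definition rk (V : seq A) (x : A) : nat := count (fun y => rb y x) V.

Definition inP (V : seq A) := forall x, x \in V -> P x.

Lemma count_split (a b : pred A) s : count a s = count (fun z => a z && b z) s + count (fun z => a z && ~~ b z) s.
Proof.
elim: s => [|x s IH] //=; rewrite IH; case: (a x); case: (b x) => //=;
  by rewrite ?add0n ?addSn ?addnS.
Qed.

Lemma rk_lt1 V x y : inP V -> x \in V -> y \in V -> r x y -> rk V x < rk V y.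
Proof.
move=> HV Hx Hy H.
rewrite /rk [X in _ < X](count_split _ (fun z => rb z x)).
have -> : count (fun z => rb z y && rb z x) V = count (fun z => rb z x) V.
  apply: eq_in_count => z Hz /=; case: (rbP z x) => Hzx; rewrite ?andbF //.
  rewrite andbT; apply/rbP; exact: (Ltrans (HV _ Hz) (HV _ Hx) (HV _ Hy)).
rewrite -{1}(addn0 (count _ _)) ltn_add2l -has_count.
apply/hasP; exists x => //=; apply/andP; split; first by apply/rbP.
by apply/rbP; apply: Lirr; apply: HV.
Qed.

Lemma rk_lt V x y : inP V -> x \in V -> y \in V -> (rk V x < rk V y <-> r x y).
Proof.
move=> HV Hx Hy; split; last exact: rk_lt1.
move=> H; case: (Ltri (HV _ Hx) (HV _ Hy)) => [//|[E|E]].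
  by rewrite E ltnn in H.
by have := rk_lt1 HV Hy Hx E; rewrite ltnNge (ltnW H).
Qed.

Lemma rk_bound V x : inP V -> x \in V -> rk V x < size V.
Proof.
move=> HV Hx; rewrite /rk -(count_predC (fun y => rb y x)) -{1}(addn0 (count _ _)) ltn_add2l.
rewrite -has_count; apply/hasP; exists x => //=; apply/rbP; apply: Lirr; exact: HV.
Qed.

Lemma rk_inj V x y : inP V -> x \in V -> y \in V -> rk V x = rk V y -> x = y.
Proof.
move=> HV Hx Hy E; case: (Ltri (HV _ Hx) (HV _ Hy)) => [H|[//|H]].
  by move/(rk_lt HV Hx Hy): H; rewrite E ltnn.
by move/(rk_lt HV Hy Hx): H; rewrite E ltnn.
Qed.

Lemma rk_perm V V' : perm_eq V V' -> rk V =1 rk V'.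
Proof. by move=> /permP H x; rewrite /rk H. Qed.

End Generic.

Lemma perm_iota (A : eqType) (V : seq A) (phi : A -> nat) :
  uniq V -> {in V &, injective phi} -> (forall x, x \in V -> phi x < size V) ->
  perm_eq (map phi V) (iota 0 (size V)).
Proof.
move=> HU Hinj Hb; apply: uniq_perm; first by rewrite map_inj_in_uniq.
  exact: iota_uniq.
have Hsub : {subset map phi V <= iota 0 (size V)}.
  by move=> p /mapP [x Hx ->]; rewrite mem_iota add0n Hb.
have HU' : uniq (map phi V) by rewrite map_inj_in_uniq.
have [_ E] := uniq_min_size HU' Hsub (eq_leq (esym (etrans (size_map _ _) (esym (size_iota _ _))))).
exact: E.
Qed.

Lemma count_phi (A : eqType) (V : seq A) (phi : A -> nat) :
  uniq V -> {in V &, injective phi} -> (forall x, x \in V -> phi x < size V) ->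
  forall x, x \in V -> count (fun y => phi y < phi x) V = phi x.
Proof.
move=> HU Hinj Hb x Hx.
have := count_map phi (fun p => p < phi x) V; rewrite /preim => <-.
rewrite (permP (perm_iota HU Hinj Hb)) count_iota_lt.
by apply/minn_idPl; apply: ltnW; apply: Hb.
Qed.

Lemma surj_phi (A : eqType) (V : seq A) (phi : A -> nat) :
  uniq V -> {in V &, injective phi} -> (forall x, x \in V -> phi x < size V) ->
  forall p, p < size V -> exists2 x, x \in V & phi x = p.
Proof.
move=> HU Hinj Hb p Hp.
have : p \in map phi V by rewrite (perm_mem (perm_iota HU Hinj Hb)) mem_iota.
by case/mapP=> x Hx ->; exists x.
Qed.

Lemma chain_nth (B : Type) (r : B -> B -> Prop) (s : seq B) d :
  chain r s <-> (forall i, i.+1 < size s -> r (nth d s i) (nth d s i.+1)).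
Proof.
elim: s => [|x s IH] //=; case: s IH => [|y s] IH //=.
split.
- case=> H1 /IH H2 [|i] Hi //=; exact: H2.
- move=> H; split; first exact: (H 0).
  by apply/IH => i Hi; apply: (H i.+1).
Qed.

Section Generic2.
Variable A : eqType.
Variable r : A -> A -> Prop.
Variable P : A -> Prop.
Hypothesis HL : Lin r P.

Lemma chain_pw s d : inP P s -> chain r s ->
  forall i j, i < j -> j < size s -> r (nth d s i) (nth d s j).
Proof.
move=> HP /(chain_nth _ _ d) Hc i j Hij; elim: j Hij => [|j IH] //.
rewrite ltnS leq_eqVlt => /orP [/eqP <-|Hij] Hj; first exact: Hc.
apply: (Ltrans HL _ _ _ (IH Hij (ltnW Hj)) (Hc _ Hj)); apply: HP; apply: mem_nth => //.
- exact: ltn_trans Hij (ltnW Hj).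
- exact: ltnW.
Qed.

Lemma chain_uniq s : inP P s -> chain r s -> uniq s.
Proof.
move=> HP Hc; case: s HP Hc => [|d s0] // HP Hc.
apply/(uniqP d) => i j Hi Hj E.
case: (ltngtP i j) => // H.
- have := chain_pw d HP Hc H Hj; rewrite E => /(Lirr HL); case; apply: HP; exact: mem_nth.
- have := chain_pw d HP Hc H Hi; rewrite E => /(Lirr HL); case; apply: HP; exact: mem_nth.
Qed.

Lemma chain_pw_iff s d i j : inP P s -> chain r s -> i < size s -> j < size s ->
  (i < j <-> r (nth d s i) (nth d s j)).
Proof.
move=> HP Hc Hi Hj; split; first by move=> H; exact: chain_pw.
move=> H; case: (ltngtP i j) => // E.
- exfalso; apply: (Lasym HL _ _ H (chain_pw d HP Hc E Hi)); apply: HP; exact: mem_nth.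
- by rewrite E in H; case: (Lirr HL _ H); apply: HP; exact: mem_nth.
Qed.

Lemma chain_last s d x : inP P s -> chain r s -> x \in s -> x = last d s \/ r x (last d s).
Proof.
move=> HP Hc Hx.
have Hs : 0 < size s by case: s Hx {HP Hc}.
rewrite (last_nth d); case: s Hs HP Hc Hx => [|y s] // _ HP Hc Hx /=.
have -> : x = nth d (y :: s) (index x (y :: s)) by rewrite nth_index.
have Hi : index x (y :: s) < (size s).+1 by rewrite -[X in _ < X]/(size (y :: s)) index_mem.
rewrite ltnS leq_eqVlt in Hi; case/orP: Hi => [/eqP ->|Hi]; first by left.
by right; apply: chain_pw.
Qed.

Lemma rk_eq_phi V (phi : A -> nat) : uniq V -> inP P V ->
  (forall x y, x \in V -> y \in V -> r x y -> phi x < phi y) ->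
  (forall x, x \in V -> phi x < size V) ->
  forall x, x \in V -> rk r V x = phi x.
Proof.
move=> HU HP Hm Hb.
have Hinj : {in V &, injective phi}.
  move=> x y Hx Hy E; case: (Ltri HL (HP _ Hx) (HP _ Hy)) => [H|[//|H]].
  - by have := Hm _ _ Hx Hy H; rewrite E ltnn.
  - by have := Hm _ _ Hy Hx H; rewrite E ltnn.
move=> x Hx; rewrite -(count_phi HU Hinj Hb Hx) /rk; apply: eq_in_count => y Hy /=.
apply/rbP/idP; first by apply: Hm.
move=> H; case: (Ltri HL (HP _ Hy) (HP _ Hx)) => [//|[E|E]].
- by rewrite E ltnn in H.
- by have := Hm _ _ Hx Hy E; rewrite ltnNge (ltnW H).
Qed.

Lemma rk_surj V : uniq V -> inP P V ->
  forall p, p < size V -> exists2 x, x \in V & rk r V x = p.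
Proof.
move=> HU HP; apply: surj_phi => //; last by move=> x; apply: (rk_bound HL HP).
by move=> x y Hx Hy; apply: (rk_inj HL HP).
Qed.

Lemma embed (d : A) (U V : seq A) : uniq U -> uniq V -> inP P V -> {subset U <= V} ->
  exists e, hom (size U) (size V) e /\ forall x, x \in U -> nth 0 e (rk r U x) = rk r V x.
Proof.
move=> HU HV HP Hsub.
have HPU : inP P U by move=> x /Hsub /HP.
pose inv p := nth d U (find (fun x => rk r U x == p) U).
have Hinv : forall p, p < size U -> inv p \in U /\ rk r U (inv p) = p.
  move=> p Hp; have [x Hx Ex] := rk_surj HU HPU Hp.
  have Hh : has (fun x => rk r U x == p) U by apply/hasP; exists x => //; apply/eqP.
  split; first by rewrite /inv mem_nth // -has_find.
  by apply/eqP; apply: (nth_find d Hh).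
exists (map (fun p => rk r V (inv p)) (iota 0 (size U))); split.
- apply/hom_nth; rewrite size_map size_iota; split=> //; split.
  + move=> i j Hij Hj; rewrite !(nth_map 0) ?size_iota //; last exact: ltn_trans Hij Hj.
    rewrite !nth_iota ?add0n //; last exact: ltn_trans Hij Hj.
    have [Hi1 Hi2] := Hinv i (ltn_trans Hij Hj); have [Hj1 Hj2] := Hinv j Hj.
    apply: (rk_lt1 HL HP); try exact: Hsub.
    by apply/(rk_lt HL HPU Hi1 Hj1); rewrite Hi2 Hj2.
  + move=> i Hi; rewrite (nth_map 0) ?size_iota // nth_iota // add0n.
    apply: (rk_bound HL HP); apply: Hsub; exact: (Hinv i Hi).1.
- move=> x Hx; have Hb := rk_bound HL HPU Hx.
  rewrite (nth_map 0) ?size_iota // nth_iota // add0n; congr (rk r V _).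
  have [H1 H2] := Hinv _ Hb; exact: (rk_inj HL HPU H1 Hx H2).
Qed.

End Generic2.

Section Generic3.
Variable A : eqType.
Variable r : A -> A -> Prop.
Variable P : A -> Prop.
Hypothesis HL : Lin r P.

Definition iffc (d : A) (ss ts : seq A) (f g : seq nat) :=
  forall i j, i < size ss -> j < size ts ->
    (nth 0 f i < nth 0 g j <-> r (nth d ss i) (nth d ts j)) /\
    (nth 0 g j < nth 0 f i <-> r (nth d ts j) (nth d ss i)).

Lemma inP_cat (ss ts c : seq A) : inP P ss -> inP P ts -> c =i ss ++ ts -> inP P c.
Proof.
move=> H1 H2 E x; rewrite E mem_cat => /orP [/H1|/H2] //.
Qed.

Lemma data_unique (d : A) ss ts c f g :
  inP P ss -> inP P ts -> chain r ss -> chain r ts -> uniq c -> c =i ss ++ ts ->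
  hom (size ss) (size c) f -> hom (size ts) (size c) g -> iffc d ss ts f g ->
  f = map (rk r c) ss /\ g = map (rk r c) ts.
Proof.
move=> Hss Hts Hcs Hct Hu Ec /hom_nth [Sf [Mf Bf]] /hom_nth [Sg [Mg Bg]] Hfg.
have Hc := inP_cat Hss Hts Ec.
have Us := chain_uniq HL Hss Hcs; have Ut := chain_uniq HL Hts Hct.
pose phi x := if x \in ss then nth 0 f (index x ss) else nth 0 g (index x ts).
have Hf : forall i, i < size ss -> phi (nth d ss i) = nth 0 f i.
  by move=> i Hi; rewrite /phi mem_nth // index_uniq.
have Hg : forall j, j < size ts -> phi (nth d ts j) = nth 0 g j.
  move=> j Hj; rewrite /phi; case: ifP => H; last by rewrite index_uniq.
  set i := index _ ss; have Hi : i < size ss by rewrite index_mem.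
  have Ei : nth d ss i = nth d ts j by rewrite nth_index.
  have [H1 H2] := Hfg i j Hi Hj; rewrite Ei in H1 H2.
  have Hn : ~ r (nth d ts j) (nth d ts j) by apply: (Lirr HL); apply: Hts; apply: mem_nth.
  case: (ltngtP (nth 0 f i) (nth 0 g j)) => // E.
  - by case: Hn; apply/H1.
  - by case: Hn; apply/H2.
have Hrep : forall x, x \in c -> (exists2 i, i < size ss & x = nth d ss i) \/
                                 (exists2 j, j < size ts & x = nth d ts j).
  move=> x; rewrite Ec mem_cat => /orP [H|H]; [left; exists (index x ss)|right; exists (index x ts)];
    by rewrite ?index_mem ?nth_index.
have Hm : forall x y, x \in c -> y \in c -> r x y -> phi x < phi y.
  move=> x y /Hrep [[i Hi ->]|[i Hi ->]] /Hrep [[j Hj ->]|[j Hj ->]] H;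
    rewrite ?Hf ?Hg //.
  - by apply: Mf => //; apply/(chain_pw_iff HL d Hss Hcs Hi Hj).
  - by apply/(Hfg i j Hi Hj).1.
  - by apply/(Hfg j i Hj Hi).2.
  - by apply: Mg => //; apply/(chain_pw_iff HL d Hts Hct Hi Hj).
have Hb : forall x, x \in c -> phi x < size c.
  by move=> x /Hrep [[i Hi ->]|[i Hi ->]]; rewrite ?Hf ?Hg //; [apply: Bf|apply: Bg].
have Hrk := rk_eq_phi HL Hu Hc Hm Hb.
split.
- apply: (eq_from_nth (x0 := 0)); first by rewrite size_map.
  move=> i Hi; rewrite Sf in Hi; rewrite (nth_map d) // Hrk ?Hf //.
  by rewrite Ec mem_cat mem_nth.
- apply: (eq_from_nth (x0 := 0)); first by rewrite size_map.
  move=> i Hi; rewrite Sg in Hi; rewrite (nth_map d) // Hrk ?Hg //.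
  by rewrite Ec mem_cat mem_nth ?orbT.
Qed.

Lemma data_exist (d : A) ss ts :
  inP P ss -> inP P ts -> chain r ss -> chain r ts ->
  let c := undup (ss ++ ts) in
  uniq c /\ c =i ss ++ ts /\
  hom (size ss) (size c) (map (rk r c) ss) /\ hom (size ts) (size c) (map (rk r c) ts) /\
  iffc d ss ts (map (rk r c) ss) (map (rk r c) ts).
Proof.
move=> Hss Hts Hcs Hct c.
have Ec : c =i ss ++ ts by apply: mem_undup.
have Hc := inP_cat Hss Hts Ec.
have Ins : forall i, i < size ss -> nth d ss i \in c by move=> i Hi; rewrite Ec mem_cat mem_nth.
have Int : forall i, i < size ts -> nth d ts i \in c by move=> i Hi; rewrite Ec mem_cat mem_nth ?orbT.
split; first exact: undup_uniq.
split=> //; split; [|split].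
- apply/hom_nth; rewrite size_map; split=> //; split.
  + move=> i j Hij Hj; have Hi := ltn_trans Hij Hj.
    rewrite !(nth_map d) //; apply: (rk_lt1 HL Hc (Ins _ Hi) (Ins _ Hj)).
    exact: (chain_pw HL d Hss Hcs Hij Hj).
  + by move=> i Hi; rewrite (nth_map d) //; apply: (rk_bound HL Hc (Ins _ Hi)).
- apply/hom_nth; rewrite size_map; split=> //; split.
  + move=> i j Hij Hj; have Hi := ltn_trans Hij Hj.
    rewrite !(nth_map d) //; apply: (rk_lt1 HL Hc (Int _ Hi) (Int _ Hj)).
    exact: (chain_pw HL d Hts Hct Hij Hj).
  + by move=> i Hi; rewrite (nth_map d) //; apply: (rk_bound HL Hc (Int _ Hi)).
- move=> i j Hi Hj; rewrite !(nth_map d) //; split; apply: (rk_lt HL Hc); by rewrite ?Ins ?Int.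
Qed.

End Generic3.

Section TermOrder.
Variable T : pd_data.
Hypothesis HT : prae_dilator T.

Local Notation lt := (th_ltT T).
Local Notation wf := (th_wf T).

Lemma T_irr n s : Tset T n s -> ~ Tlt T n s s.
Proof. by case: HT => H _; apply: H. Qed.
Lemma T_trans n s t u : Tset T n s -> Tset T n t -> Tset T n u ->
      Tlt T n s t -> Tlt T n t u -> Tlt T n s u.
Proof. by case: HT => _ [H _]; apply: H. Qed.
Lemma T_tri n s t : Tset T n s -> Tset T n t -> Tlt T n s t \/ s = t \/ Tlt T n t s.
Proof. by case: HT => _ [_ [H _]]; apply: H. Qed.
Lemma T_set n m f s : hom n m f -> Tset T n s -> Tset T m (Tmor T m f s).
Proof. by case: HT => _ [_ [_ [H _]]]; apply: H. Qed.
Lemma T_mono n m f s t : hom n m f -> Tset T n s -> Tset T n t ->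
      Tlt T n s t -> Tlt T m (Tmor T m f s) (Tmor T m f t).
Proof. by case: HT => _ [_ [_ [_ [H _]]]]; apply: H. Qed.
Lemma T_comp n m k f g s : hom n m f -> hom m k g -> Tset T n s ->
      Tmor T k (comp_hom g f) s = Tmor T k g (Tmor T m f s).
Proof. by case: HT => _ [_ [_ [_ [_ [_ [H _]]]]]]; apply: H. Qed.
Lemma T_supp n m f s : hom n m f -> Tset T n s ->
      Tsupp T m (Tmor T m f s) = map (nth 0 f) (Tsupp T n s).
Proof. by case: HT => _ [_ [_ [_ [_ [_ [_ [_ [H _]]]]]]]]; apply: H. Qed.

Lemma T_asym n s t : Tset T n s -> Tset T n t -> Tlt T n s t -> Tlt T n t s -> False.
Proof. move=> Hs Ht H1 H2; apply: (T_irr Hs); exact: (T_trans Hs Ht Hs H1 H2). Qed.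

Lemma T_reflect n m f s t : hom n m f -> Tset T n s -> Tset T n t ->
  Tlt T m (Tmor T m f s) (Tmor T m f t) -> Tlt T n s t.
Proof.
move=> Hf Hs Ht H; case: (T_tri Hs Ht) => [//|[E|E]].
- by rewrite E in H; case: (T_irr (T_set Hf Ht) H).
- by case: (T_asym (T_set Hf Hs) (T_set Hf Ht) H (T_mono Hf Ht Hs E)).
Qed.

Lemma T_inj n m f s t : hom n m f -> Tset T n s -> Tset T n t ->
  Tmor T m f s = Tmor T m f t -> s = t.
Proof.
move=> Hf Hs Ht E; case: (T_tri Hs Ht) => [H|[//|H]].
- by have := T_mono Hf Hs Ht H; rewrite E => /(T_irr (T_set Hf Ht)).
- by have := T_mono Hf Ht Hs H; rewrite E => /(T_irr (T_set Hf Ht)).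
Qed.

Lemma hom_comp n m k f g : hom n m f -> hom m k g -> hom n k (comp_hom g f).
Proof.
move=> /hom_nth [Sf [Mf Bf]] /hom_nth [Sg [Mg Bg]]; apply/hom_nth.
rewrite /comp_hom size_map; split=> //; split.
- move=> i j Hij Hj; rewrite !(nth_map 0) ?Sf //; last exact: ltn_trans Hij Hj.
  by apply: Mg; [apply: Mf|apply: Bf].
- by move=> i Hi; rewrite (nth_map 0) ?Sf //; apply: Bg; apply: Bf.
Qed.

Lemma T_transfer n m k K f g e s t : hom n k f -> hom m k g -> hom k K e ->
  Tset T n s -> Tset T m t ->
  (Tlt T k (Tmor T k f s) (Tmor T k g t) <->
   Tlt T K (Tmor T K (comp_hom e f) s) (Tmor T K (comp_hom e g) t)).
Proof.
move=> Hf Hg He Hs Ht; rewrite (T_comp Hf He Hs) (T_comp Hg He Ht); split.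
- by move=> H; apply: (T_mono He) => //; [apply: (T_set Hf Hs)|apply: (T_set Hg Ht)].
- by move=> H; apply: (T_reflect He) => //; [apply: (T_set Hf Hs)|apply: (T_set Hg Ht)].
Qed.

Definition TL (ss : seq term) sg ts tu :=
  let c := undup (ss ++ ts) in
  Tlt T (size c) (Tmor T (size c) (map (rk lt c) ss) sg) (Tmor T (size c) (map (rk lt c) ts) tu).

Section WithLin.
Variable P : term -> Prop.
Hypothesis HL : Lin lt P.

Lemma TL_V ss sg ts tu V :
  inP P ss -> inP P ts -> chain lt ss -> chain lt ts ->
  Tset T (size ss) sg -> Tset T (size ts) tu ->
  uniq V -> inP P V -> {subset ss ++ ts <= V} ->
  (TL ss sg ts tu <->
   Tlt T (size V) (Tmor T (size V) (map (rk lt V) ss) sg) (Tmor T (size V) (map (rk lt V) ts) tu)).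
Proof.
move=> Hss Hts Hcs Hct Hsg Htu HV HPV Hsub.
have [Hu [Ec [Hf [Hg _]]]] := data_exist HL (Th 0 [::]) Hss Hts Hcs Hct.
set c := undup (ss ++ ts) in Hu Ec Hf Hg *.
have Hsub' : {subset c <= V} by move=> x; rewrite Ec; apply: Hsub.
have [e [He Hen]] := embed HL (Th 0 [::]) Hu HV HPV Hsub'.
rewrite /TL -/c (T_transfer Hf Hg He Hsg Htu).
have Ecomp : forall xs, {subset xs <= c} -> comp_hom e (map (rk lt c) xs) = map (rk lt V) xs.
  move=> xs Hxs; rewrite /comp_hom -map_comp; apply/eq_in_map => x Hx /=.
  by apply: Hen; apply: Hxs.
rewrite !Ecomp //.
- by move=> x Hx; rewrite Ec mem_cat Hx orbT.
- by move=> x Hx; rewrite Ec mem_cat Hx.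
Qed.


Local Notation argsOK ss sg := (inP P ss /\ chain lt ss /\ Tset T (size ss) sg).

Lemma TL_hom ss sg ts tu : argsOK ss sg -> argsOK ts tu ->
  let c := undup (ss ++ ts) in
  uniq c /\ inP P c /\ hom (size ss) (size c) (map (rk lt c) ss) /\ hom (size ts) (size c) (map (rk lt c) ts).
Proof.
move=> [Hss [Hcs Hsg]] [Hts [Hct Htu]] c.
have [Hu [Ec [Hf [Hg _]]]] := data_exist HL (Th 0 [::]) Hss Hts Hcs Hct.
split=> //; split; [exact: inP_cat Ec|by split].
Qed.

Lemma TL_irr ss sg : argsOK ss sg -> ~ TL ss sg ss sg.
Proof.
move=> H; have [_ [_ [Hf _]]] := TL_hom H H.
rewrite /TL; apply: T_irr; apply: (T_set Hf); exact: H.2.2.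
Qed.

Lemma TL_asym ss sg ts tu : argsOK ss sg -> argsOK ts tu ->
  TL ss sg ts tu -> TL ts tu ss sg -> False.
Proof.
move=> H1 H2; have [Hu [HP [Hf Hg]]] := TL_hom H1 H2.
move: (H1) (H2) => [Hss [Hcs Hsg]] [Hts [Hct Htu]].
rewrite /TL; rewrite -/(TL ts tu ss sg).
rewrite (TL_V Hts Hss Hct Hcs Htu Hsg Hu HP); last first.
  by move=> x; rewrite !mem_cat mem_undup mem_cat orbC.
move=> A1 A2; apply: (T_asym _ _ A1 A2); [apply: (T_set Hf Hsg)|apply: (T_set Hg Htu)].
Qed.

Lemma hom_rk V xs : inP P V -> inP P xs -> chain lt xs -> {subset xs <= V} ->
  hom (size xs) (size V) (map (rk lt V) xs).
Proof.
move=> HPV Hxs Hc Hsub; apply/hom_nth; rewrite size_map; split=> //; split.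
- move=> i j Hij Hj; have Hi := ltn_trans Hij Hj.
  rewrite !(nth_map (Th 0 [::])) //.
  apply: (rk_lt1 HL HPV); try (apply: Hsub; exact: mem_nth).
  exact: (chain_pw HL (Th 0 [::]) Hxs Hc Hij Hj).
- move=> i Hi; rewrite (nth_map (Th 0 [::])) //.
  by apply: (rk_bound HL HPV); apply: Hsub; exact: mem_nth.
Qed.

Lemma TL_trans rs rg ss sg ts tu : argsOK rs rg -> argsOK ss sg -> argsOK ts tu ->
  TL rs rg ss sg -> TL ss sg ts tu -> TL rs rg ts tu.
Proof.
move=> [Hrs [Hcr Hrg]] [Hss [Hcs Hsg]] [Hts [Hct Htu]].
set V := undup (rs ++ ss ++ ts).
have HU : uniq V by apply: undup_uniq.
have HPV : inP P V.
  move=> x; rewrite mem_undup !mem_cat => /orP [/Hrs|/orP [/Hss|/Hts]] //.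
have Hr : {subset rs <= V} by move=> x Hx; rewrite mem_undup !mem_cat Hx.
have Hs : {subset ss <= V} by move=> x Hx; rewrite mem_undup !mem_cat Hx !orbT.
have Ht : {subset ts <= V} by move=> x Hx; rewrite mem_undup !mem_cat Hx !orbT.
have Hsub : forall xs ys, {subset xs <= V} -> {subset ys <= V} -> {subset xs ++ ys <= V}.
  by move=> xs ys H1 H2 x; rewrite mem_cat => /orP [/H1|/H2].
rewrite (TL_V Hrs Hss Hcr Hcs Hrg Hsg HU HPV (Hsub _ _ Hr Hs)).
rewrite (TL_V Hss Hts Hcs Hct Hsg Htu HU HPV (Hsub _ _ Hs Ht)).
rewrite (TL_V Hrs Hts Hcr Hct Hrg Htu HU HPV (Hsub _ _ Hr Ht)).
apply: T_trans.
- exact: (T_set (hom_rk HPV Hrs Hcr Hr) Hrg).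
- exact: (T_set (hom_rk HPV Hss Hcs Hs) Hsg).
- exact: (T_set (hom_rk HPV Hts Hct Ht) Htu).
Qed.

Lemma TL_tri ss sg ts tu : argsOK ss sg -> argsOK ts tu ->
  Tsupp T (size ss) sg = iota 0 (size ss) -> Tsupp T (size ts) tu = iota 0 (size ts) ->
  TL ss sg ts tu \/ (ss = ts /\ sg = tu) \/ TL ts tu ss sg.
Proof.
move=> H1 H2 Sp1 Sp2; have [Hu [HP [Hf Hg]]] := TL_hom H1 H2.
move: H1 H2 => [Hss [Hcs Hsg]] [Hts [Hct Htu]].
set c := undup (ss ++ ts) in Hu HP Hf Hg.
have Hsub : {subset ts ++ ss <= c} by move=> x; rewrite mem_undup !mem_cat orbC.
case: (T_tri (T_set Hf Hsg) (T_set Hg Htu)) => [H|[E|H]].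
- by left.
- right; left.
  have EF : map (rk lt c) ss = map (rk lt c) ts.
    have := congr1 (Tsupp T (size c)) E.
    rewrite (T_supp Hf Hsg) (T_supp Hg Htu) Sp1 Sp2.
    have K : forall (xs : seq term) h, map (nth 0 (map h xs)) (iota 0 (size xs)) = map h xs.
      by move=> xs h; rewrite -{1}(size_map h xs) -/(mkseq _ _) mkseq_nth.
    by rewrite !K.
  have Ess : ss = ts.
    have Hsz : size ss = size ts by rewrite -(size_map (rk lt c) ss) EF size_map.
    apply: (eq_from_nth (x0 := Th 0 [::])) => // i Hi.
    have := congr1 (fun l => nth 0 l i) EF; rewrite /= !(nth_map (Th 0 [::])) -?Hsz //.
    apply: (rk_inj HL HP); rewrite mem_undup mem_cat mem_nth ?orbT -?Hsz //.
  split=> //; subst ts.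
  exact: (T_inj Hg Hsg Htu E).
- right; right; rewrite /TL -/c.
  apply: (iffRL (TL_V Hts Hss Hct Hcs Htu Hsg Hu HP Hsub)); exact: H.
Qed.

Lemma Ip_iff d sg ss tu ts : argsOK ss sg -> argsOK ts tu ->
  (exists (c : seq term) (f g : seq nat),
     List.NoDup c /\ (forall x, List.In x c <-> List.In x ss \/ List.In x ts) /\
     hom (size ss) (size c) f /\ hom (size ts) (size c) g /\
     iffc lt d ss ts f g /\
     Tlt T (size c) (Tmor T (size c) f sg) (Tmor T (size c) g tu))
  <-> TL ss sg ts tu.
Proof.
move=> H1 H2; move: (H1) (H2) => [Hss [Hcs Hsg]] [Hts [Hct Htu]].
split.
- case=> c [f [g [Hn [Hin [Hf [Hg [Hi Hlt]]]]]]].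
  have Hu : uniq c by apply/NoDup_uniq.
  have Ec : c =i ss ++ ts.
    move=> x; rewrite mem_cat; apply/idP/idP.
    + by move/In_mem/Hin => [/In_mem ->|/In_mem ->]; rewrite ?orbT.
    + by move=> H; apply/In_mem/Hin; case/orP: H => /In_mem; auto.
  have [Ef Eg] := data_unique HL Hss Hts Hcs Hct Hu Ec Hf Hg Hi.
  have Hp : perm_eq c (undup (ss ++ ts)).
    by apply: uniq_perm => // [|x]; [apply: undup_uniq|rewrite mem_undup].
  move: Hlt; rewrite /TL /= Ef Eg (perm_size Hp).
  by rewrite !(eq_map (rk_perm lt Hp)); exact: id.
- move=> H; case: (data_exist HL d Hss Hts Hcs Hct) => Hu [Ec [Hf [Hg Hi]]].
  exists (undup (ss ++ ts)), (map (rk lt (undup (ss ++ ts))) ss), (map (rk lt (undup (ss ++ ts))) ts).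
  split; first by apply/NoDup_uniq.
  split; last by [].
  move=> x; rewrite In_mem Ec mem_cat; split.
  + by case/orP=> /In_mem; auto.
  + by case=> /In_mem ->; rewrite ?orbT.
Qed.

Lemma lt_iff sg ss tu ts : argsOK ss sg -> argsOK ts tu ->
  (lt (Th sg ss) (Th tu ts) <->
   (TL ss sg ts tu /\ (size ss = 0 \/ lt (last (Th sg ss) ss) (Th tu ts))) \/
   (0 < size ts /\ (Th sg ss = last (Th sg ss) ts \/ lt (Th sg ss) (last (Th sg ss) ts)))).
Proof.
move=> H1 H2; rewrite th_ltT_unfold /step.
rewrite -(Ip_iff (Th sg ss) H1 H2) /iffc.
split; case=> H; [left|right|left|right] => //.
- case: H => c [f [g [A1 [A2 [A3 [A4 [A5 [A6 A7]]]]]]]]; split=> //.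
  by exists c, f, g.
- case: H => [[c [f [g [A1 [A2 [A3 [A4 [A5 A6]]]]]]]] A7].
  by exists c, f, g.
Qed.

End WithLin.
End TermOrder.

From mathcomp Require Import zify.

Lemma last_dflt (A : Type) (d d' : A) s : 0 < size s -> last d s = last d' s.
Proof. by case: s. Qed.

Section Main.
Variable T : pd_data.
Hypothesis HT : prae_dilator T.
Local Notation lt := (th_ltT T).
Local Notation wf := (th_wf T).

Lemma foldr_and_iff (ss : seq term) :
  foldr and True (map wf ss) <-> (forall x, x \in ss -> wf x).
Proof.
elim: ss => [|y ss IH] //=; split.
- case=> H1 /IH H2 x; rewrite in_cons => /orP [/eqP ->|] //; exact: H2.
- move=> H; split; first by apply: H; rewrite in_cons eqxx.
  by apply/IH => x Hx; apply: H; rewrite in_cons Hx orbT.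
Qed.

Definition PN N x := wf x /\ tsize x <= N.

Lemma PN_args N sg ss : PN N.+1 (Th sg ss) ->
  inP (PN N) ss /\ chain lt ss /\ Tset T (size ss) sg /\ Tsupp T (size ss) sg = iota 0 (size ss).
Proof.
case=> [[Hw [Hc [Hs Hsp]]] Hn]; split=> //.
move=> x Hx; split; first by move/foldr_and_iff: Hw; apply.
by rewrite -ltnS (leq_trans (tsize_arg sg Hx) Hn).
Qed.

Lemma PN_mono N M x : N <= M -> PN N x -> PN M x.
Proof. by move=> H [H1 H2]; split=> //; apply: leq_trans H. Qed.

Section Step.
Variable N : nat.
Hypothesis HL : Lin lt (PN N).
Local Notation P := (PN N).
Local Notation Q := (PN N.+1).

Lemma PQ x : P x -> Q x.
Proof. exact: PN_mono. Qed.

Lemma Qargs sg ss : Q (Th sg ss) ->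
  (inP P ss /\ chain lt ss /\ Tset T (size ss) sg) /\ Tsupp T (size ss) sg = iota 0 (size ss).
Proof. by case/PN_args=> [A [B [C D]]]. Qed.

Lemma Sub sg ss x : Q (Th sg ss) -> x \in ss -> lt x (Th sg ss).
Proof.
move=> HQ Hx; have [[Hss [Hcs Hsg]] _] := Qargs HQ.
have HQx : Q x := PQ (Hss _ Hx).
case: x HQx Hx => xg xs HQx Hx.
have [Ax _] := Qargs HQx.
apply/(lt_iff HL Ax (conj Hss (conj Hcs Hsg))); right; split.
  by case: (ss) Hx.
exact: (chain_last HL _ Hss Hcs Hx).
Qed.

Lemma Trans_Q M r s t : Q r -> Q s -> Q t -> tsize r + tsize s + tsize t <= M ->
  lt r s -> lt s t -> lt r t.
Proof.
elim: M r s t => [|M IH] r s t Qr Qs Qt HM.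
  by move: HM; rewrite leqn0 !addn_eq0 -[tsize r == 0]negbK -lt0n tsize_gt0.
case: r Qr HM => rg rs Qr; case: s Qs => sg ss Qs; case: t Qt => tu ts Qt HM.
have [Ar _] := Qargs Qr; have [As _] := Qargs Qs; have [At _] := Qargs Qt.
move=> Hrs0 Hst0.
have Hrs := iffLR (lt_iff HL Ar As) Hrs0; have Hst := iffLR (lt_iff HL As At) Hst0.
case: Hst => [[TLst Lst]|[Hts Est]].
- case: Hrs => [[TLrs Lrs]|[Hss Ers]].
  + apply/(lt_iff HL Ar At); left; split; first exact: (TL_trans HT HL Ar As At TLrs TLst).
    case: (posnP (size rs)) => [E|Hpos]; first by left.
    case: Lrs => [E|Lrs]; first by rewrite E in Hpos.
    right; have Hl : last (Th rg rs) rs \in rs by apply: last_in.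
    apply: (IH _ _ _ (PQ (Ar.1 _ Hl)) Qs Qt) => //.
    have := tsize_arg rg Hl; move: HM; lia.
  + case: Lst => [E|Lst]; first by rewrite E in Hss.
    rewrite (last_dflt (Th sg ss) (Th rg rs) Hss) in Lst.
    have Hl : last (Th rg rs) ss \in ss by apply: last_in.
    case: Ers => [E|Ers]; first by rewrite E.
    apply: (IH _ _ _ Qr (PQ (As.1 _ Hl)) Qt) => //.
    have := tsize_arg sg Hl; move: HM; lia.
- apply/(lt_iff HL Ar At).
  rewrite (last_dflt (Th sg ss) (Th rg rs) Hts) in Est.
  have Hl : last (Th rg rs) ts \in ts by apply: last_in.
  right; split=> //; right.
  case: Est => [E|Est]; first by rewrite -E.
  apply: (IH _ _ _ Qr Qs (PQ (At.1 _ Hl))) => //.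
  have := tsize_arg tu Hl; move: HM; lia.
Qed.

Lemma TransQ r s t : Q r -> Q s -> Q t -> lt r s -> lt s t -> lt r t.
Proof. by move=> Qr Qs Qt; apply: (Trans_Q (M := tsize r + tsize s + tsize t)). Qed.

Lemma Hmix n y x : P y -> tsize y <= n -> Q x -> lt x y -> lt y x -> False.
Proof.
elim: n y x => [|n IH] y x Py Hy Qx Hxy Hyx.
  by move: Hy; rewrite leqn0 -[tsize y == 0]negbK -lt0n tsize_gt0.
case: x Qx Hxy Hyx => xg xs Qx; case: y Py Hy => yg ys Py Hy Hxy Hyx.
have [Ax _] := Qargs Qx; have [Ay _] := Qargs (PQ Py).
case: (iffLR (lt_iff HL Ax Ay) Hxy) => [[TLxy Lxy]|[Hys Exy]].
- case: (iffLR (lt_iff HL Ay Ax) Hyx) => [[TLyx Lyx]|[Hxs Eyx]].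
  + exact: (TL_asym HT HL Ax Ay TLxy TLyx).
  + case: Lxy => [E|Lxy]; first by rewrite E in Hxs.
    rewrite (last_dflt (Th yg ys) (Th xg xs) Hxs) in Eyx.
    have Hl : last (Th xg xs) xs \in xs by apply: last_in.
    case: Eyx => [E|Eyx].
    * by rewrite -E in Lxy; apply: (Lirr HL Py).
    * exact: (Lasym HL Py (Ax.1 _ Hl) Eyx Lxy).
- have Hl : last (Th xg xs) ys \in ys by apply: last_in.
  have Pl := Ay.1 _ Hl.
  have Syl := Sub (PQ Py) Hl.
  case: Exy => [E|Exy].
  + by rewrite E in Hyx; apply: (Lasym HL Py Pl Hyx Syl).
  + apply: (IH _ (Th xg xs) Pl _ Qx Exy).
    * by have := tsize_arg yg Hl; move: Hy; lia.
    * exact: (TransQ (PQ Pl) (PQ Py) Qx Syl Hyx).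
Qed.

Lemma Irr_Q x : Q x -> ~ lt x x.
Proof.
case: x => xg xs Qx H; have [Ax _] := Qargs Qx.
case: (iffLR (lt_iff HL Ax Ax) H) => [[TL1 _]|[Hxs E]].
- exact: (TL_irr HT HL Ax TL1).
- have Hl : last (Th xg xs) xs \in xs by apply: last_in.
  case: E => [E|E].
  + by have := tsize_arg xg Hl; rewrite -E ltnn.
  + exact: (Hmix (Ax.1 _ Hl) (leqnn _) Qx E (Sub Qx Hl)).
Qed.

Lemma Tri_Q M s t : Q s -> Q t -> tsize s + tsize t <= M -> lt s t \/ s = t \/ lt t s.
Proof.
elim: M s t => [|M IH] s t Qs Qt HM.
  by move: HM; rewrite leqn0 addn_eq0 -[tsize s == 0]negbK -lt0n tsize_gt0.
case: s Qs HM => sg ss Qs; case: t Qt => tu ts Qt HM.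
have [As Sps] := Qargs Qs; have [At Spt] := Qargs Qt.
have A : lt (Th sg ss) (Th tu ts) \/ (size ts = 0 \/ lt (last (Th tu ts) ts) (Th sg ss)).
  case: (posnP (size ts)) => [E|Hpos]; first by right; left.
  have Hl : last (Th sg ss) ts \in ts by apply: last_in.
  have Pl := At.1 _ Hl.
  case: (IH (Th sg ss) _ Qs (PQ Pl)) => [|H|[E|H]].
  - by have := tsize_arg tu Hl; move: HM; lia.
  - by left; apply/(lt_iff HL As At); right; split=> //; right.
  - by left; apply/(lt_iff HL As At); right; split=> //; left.
  - by right; right; rewrite (last_dflt _ (Th sg ss) Hpos).
have B : lt (Th tu ts) (Th sg ss) \/ (size ss = 0 \/ lt (last (Th sg ss) ss) (Th tu ts)).
  case: (posnP (size ss)) => [E|Hpos]; first by right; left.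
  have Hl : last (Th tu ts) ss \in ss by apply: last_in.
  have Pl := As.1 _ Hl.
  case: (IH (Th tu ts) _ Qt (PQ Pl)) => [|H|[E|H]].
  - by have := tsize_arg sg Hl; move: HM; lia.
  - by left; apply/(lt_iff HL At As); right; split=> //; right.
  - by left; apply/(lt_iff HL At As); right; split=> //; left.
  - by right; right; rewrite (last_dflt _ (Th tu ts) Hpos).
case: A => [A|A]; first by left.
case: B => [B|B]; first by right; right.
case: (TL_tri HT HL As At Sps Spt) => [H|[[E1 E2]|H]].
- by left; apply/(lt_iff HL As At); left.
- by right; left; rewrite E1 E2.
- by right; right; apply/(lt_iff HL At As); left.
Qed.

Lemma LO_step : Lin lt Q.
Proof.
split; first exact: Irr_Q.
split; first by move=> x y z Qx Qy Qz; apply: TransQ.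
by move=> x y Qx Qy; apply: (Tri_Q (M := tsize x + tsize y)) => //.
Qed.

End Step.

Lemma LO_all N : Lin lt (PN N).
Proof.
elim: N => [|N IH]; last exact: LO_step.
have F : forall x, ~ PN 0 x.
  by move=> x [_]; rewrite leqn0 -[tsize x == 0]negbK -lt0n tsize_gt0.
split; first by move=> x /F.
by split; [move=> x y z /F|move=> x y /F].
Qed.

Lemma Lin_wf : Lin lt wf.
Proof.
have HP : forall N x, wf x -> tsize x <= N -> PN N x by move=> N x H1 H2; split.
split; [|split].
- move=> x Hx; exact: (Lirr (LO_all (tsize x)) (HP _ _ Hx (leqnn _))).
- move=> x y z Hx Hy Hz; apply: (Ltrans (LO_all (tsize x + tsize y + tsize z)));
    apply: HP => //; lia.
- move=> x y Hx Hy; apply: (Ltri (LO_all (tsize x + tsize y))); apply: HP => //; lia.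
Qed.

Lemma Sub_wf sg ss x : wf (Th sg ss) -> x \in ss -> lt x (Th sg ss).
Proof.
move=> Hw Hx; apply: (Sub (N := tsize (Th sg ss)) (LO_all _)) => //.
all: by split=> //; apply: leqW.
Qed.

End Main.

Theorem theorem4p3 (T : pd_data) :
  prae_dilator T -> BH_fixed_point T (th_wf T) (th_ltT T).
Proof.
move=> HT; have HL := Lin_wf HT.
split; first exact: HL.
exists (fun p => Th p.2 p.1).
have Hmem : forall r, Dmem T (th_wf T) (th_ltT T) r -> th_wf T (Th r.2 r.1).
  move=> [a s] [H1 [H2 [H3 H4]]] /=; split; last by [].
  by apply/foldr_and_iff => x /In_mem /H1.
split; first exact: Hmem.
move=> [a rho] [b pi] Hr Hp; split; last first.
  by move=> y /In_mem Hy; apply: (Sub_wf HT (Hmem _ Hr)).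
move: Hr Hp => /= [Ha1 [Ha2 [Ha3 Ha4]]] [Hb1 [Hb2 [Hb3 Hb4]]].
case=> c [fa [fb [Hc1 [Hc2 [Hc3 [Hc4 Hc5]]]]]] /= Hfb.
set d := Th rho a.
have HPa : inP (th_wf T) a by move=> x /In_mem /Ha1.
have HPb : inP (th_wf T) b by move=> x /In_mem /Hb1.
have HPc : inP (th_wf T) c.
  by move=> x /In_mem /Hc2 [/Ha1|/Hb1].
have Hcu := chain_uniq HL HPc Hc1.
have Emb : forall (e : seq term) f, enum_emb f e c ->
    size f = size e /\ forall i, i < size e -> nth 0 f i < size c /\ nth d c (nth 0 f i) = nth d e i.
  move=> e f [Hs He]; split=> // i Hi.
  have := He i Hi; rewrite (nth_error_nth d Hi) => E.
  have Hfi := nth_error_size E; split=> //.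
  by move: E; rewrite (nth_error_nth d Hfi) => [[]].
have [Sa Ea] := Emb _ _ Hc3; have [Sb Eb] := Emb _ _ Hc4.
have Hhom : forall e f, inP (th_wf T) e -> chain (th_ltT T) e -> size f = size e ->
    (forall i, i < size e -> nth 0 f i < size c /\ nth d c (nth 0 f i) = nth d e i) ->
    hom (size e) (size c) f.
  move=> e f HPe Hce Sf Ef; apply/hom_nth; split=> //; split; last by move=> i /Ef [].
  move=> i j Hij Hj; have Hi := ltn_trans Hij Hj.
  have [Bi Ci] := Ef i Hi; have [Bj Cj] := Ef j Hj.
  apply/(chain_pw_iff HL d HPc Hc1 Bi Bj); rewrite Ci Cj.
  exact: (chain_pw HL d HPe Hce Hij Hj).
apply/th_ltT_unfold; left; exists c, fa, fb.
split; first by apply/NoDup_uniq.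
split; first exact: Hc2.
split; first exact: Hhom.
split; first exact: Hhom.
split.
  move=> i j Hi Hj; have [Bi Ci] := Ea i Hi; have [Bj Cj] := Eb j Hj.
  rewrite (chain_pw_iff HL d HPc Hc1 Bi Bj) (chain_pw_iff HL d HPc Hc1 Bj Bi) Ci Cj.
  by split.
split; first exact: Hc5.
case: (posnP (size a)) => [E|Hpos]; first by left.
by right; apply: Hfb; apply/In_mem; apply: last_in.
Qed.
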